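(* Let $M$ be a matroid on $E$ whose dual is transversal with maximal presentation $\mathcal A=(A_1,\ldots,A_r)$, $r=r^*(M)$; let $e\in E$, ordered so that for some $k\in[r]$, $e\in A_i$ iff $i\le k$. Let $G$ be a minimal $(e,\mathcal A)$-presenting graph on vertex set $[k]$ for which the identity map is the presenting map. If $G$ is a tree with edge set $\{\{i_1,j_1\},\ldots,\{i_{k-1},j_{k-1}\}\}$, then $$(\mathrm{cl}_{M\backslash e}(A_{i_1}\cup A_{j_1}-e),\ldots,\mathrm{cl}_{M\backslash e}(A_{i_{k-1}}\cup A_{j_{k-1}}-e),A_{k+1},\ldots,A_r)$$ is a presentation of $(M\backslash e)^*$.
   Context: $M^*=M[\mathcal A]$, the transversal matroid whose independent sets are the partial transversals of $\mathcal A$; the presentation is maximal if every $A_i$ is a cyclic flat of $M$ (a flat that is a union of circuits). For $X\subseteq E$: $\mathcal A(X)=\{i:A_i\subseteq X\}$, $\mathcal A_e(X)=\{i\in\mathcal A(X): e\in A_i\}$, and $G[U]$ is the induced subgraph on $U$. A graph with vertex set $\mathcal A_e(E)=[k]$ is $(e,\mathcal A)$-presenting if for all distinct $i,j$ the graph $G[\mathcal A_e(\mathrm{cl}_M(A_i\cup A_j))]$ is connected; minimal if deleting any one edge destroys this property. *)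

(* Defs.v *)
From mathcomp Require Import all_boot all_order.
Set Implicit Arguments. Unset Strict Implicit. Unset Printing Implicit Defensive.

Section Matroids.
Variable T : finType.

Record mat := Mat { ground : {set T}; indep : {set T} -> bool }.

Definition is_matroid (M : mat) : Prop :=
  [/\ indep M set0,
      (forall I : {set T}, indep M I -> I \subset ground M),
      (forall I J : {set T}, J \subset I -> indep M I -> indep M J) &
      (forall I J : {set T}, indep M I -> indep M J -> #|I| < #|J| ->
         exists2 x, x \in J :\: I & indep M (x |: I))].

Definition rank (M : mat) (X : {set T}) : nat :=
  \max_(I : {set T} | (I \subset X) && indep M I) #|I|.

Definition is_basis (M : mat) (B : {set T}) : bool :=
  indep M B && [forall J : {set T}, (indep M J && (B \subset J)) ==> (J == B)].

Definition dual (M : mat) : mat :=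
  Mat (ground M)
      (fun X => (X \subset ground M) &&
                [exists B : {set T}, is_basis M B && [disjoint X & B]]).

Definition delete (M : mat) (e : T) : mat :=
  Mat (ground M :\ e) (fun X => indep M X && (e \notin X)).

Definition cl (M : mat) (X : {set T}) : {set T} :=
  [set x in ground M | rank M (x |: X) == rank M X].

Definition is_flat (M : mat) (X : {set T}) : bool :=
  (X \subset ground M) && (cl M X == X).

Definition is_circuit (M : mat) (C : {set T}) : bool :=
  [&& C \subset ground M, ~~ indep M C &
      [forall x in C, indep M (C :\ x)]].

Definition is_cyclic_flat (M : mat) (X : {set T}) : bool :=
  is_flat M X &&
  [forall x in X, exists C : {set T}, [&& is_circuit M C, x \in C & C \subset X]].

Definition partial_transversal (I : Type) (A : I -> {set T}) (X : {set T}) : Prop :=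
  exists f : T -> option I,
    {in X &, injective f} /\
    (forall x, x \in X -> exists2 i, f x = Some i & x \in A i).

Definition is_presentation (N : mat) (I : Type) (A : I -> {set T}) : Prop :=
  (forall i, A i \subset ground N) /\
  (forall X : {set T}, X \subset ground N -> (indep N X <-> partial_transversal A X)).

End Matroids.

Section Graphs.
Variable k : nat.

Definition simple_graph (G : {set {set 'I_k}}) : Prop :=
  forall ed : {set 'I_k}, ed \in G -> #|ed| = 2.

Definition adj (G : {set {set 'I_k}}) : rel 'I_k := fun x y => [set x; y] \in G.

Definition induced_connected (G : {set {set 'I_k}}) (U : {set 'I_k}) : Prop :=
  forall u v, u \in U -> v \in U ->
    connect [rel x y | [&& adj G x y, x \in U & y \in U]] u v.

Definition has_cycle (G : {set {set 'I_k}}) : Prop :=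
  exists s : seq 'I_k, [/\ uniq s, 3 <= size s & cycle (adj G) s].

Definition is_tree (G : {set {set 'I_k}}) : Prop :=
  induced_connected G setT /\ ~ has_cycle G.

End Graphs.

Section Presenting.
Variables (T : finType) (M : mat T) (r k : nat) (hkr : k <= r) (A : 'I_r -> {set T}) (e : T).

(* A_e(X) = { i : A_i \subseteq X, e \in A_i }, as vertices of G (identity presenting map) *)
Definition Ae (X : {set T}) : {set 'I_k} :=
  [set i : 'I_k | (A (widen_ord hkr i) \subset X) && (e \in A (widen_ord hkr i))].

Definition presenting (G : {set {set 'I_k}}) : Prop :=
  forall i j : 'I_k, i != j ->
    induced_connected G (Ae (cl M (A (widen_ord hkr i) :|: A (widen_ord hkr j)))).

Definition minimal_presenting (G : {set {set 'I_k}}) : Prop :=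
  presenting G /\ forall ed : {set 'I_k}, ed \in G -> ~ presenting (G :\ ed).

Definition new_family (G : {set {set 'I_k}})
  (t : ({ed : {set 'I_k} | ed \in G} + {i : 'I_r | k <= i})%type) : {set T} :=
  match t with
  | inl ed => cl (delete M e) ((\bigcup_(i in val ed) A (widen_ord hkr i)) :\ e)
  | inr i => A (val i)
  end.

End Presenting.

(* Main.v *)
Require Import Defs.
From mathcomp Require Import all_boot all_order.
From mathcomp Require Import zify.
Set Implicit Arguments. Unset Strict Implicit. Unset Printing Implicit Defensive.


Lemma disjP (T : finType) (A B : {set T}) :
  reflect (forall x, x \in A -> x \in B -> False) [disjoint A & B].
Proof.
apply: (iffP idP) => [d x xa xb | h].
  by rewrite (disjointFr d xa) in xb.
apply/pred0P => x /=; apply/negP => /andP [xa xb]; exact: h xa xb.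
Qed.

Lemma ndisjP (T : finType) (A B : {set T}) :
  ~~ [disjoint A & B] -> exists2 x, x \in A & x \in B.
Proof.
rewrite -setI_eq0 => /set0Pn [x]; rewrite inE => /andP [? ?]; by exists x.
Qed.

Section Mat.
Variables (T : finType) (M : mat T) (hM : is_matroid M).
Implicit Types I J B C S X Y K : {set T}.

Lemma m_hered I J : J \subset I -> indep M I -> indep M J.
Proof. by case: hM => _ _ h _; apply: h. Qed.

Lemma m_aug I J : indep M I -> indep M J -> #|I| < #|J| ->
  exists2 x, x \in J :\: I & indep M (x |: I).
Proof. by case: hM => _ _ _ h; apply: h. Qed.

Lemma rank_ge I Y : indep M I -> I \subset Y -> #|I| <= rank M Y.
Proof.
move=> iI sIY; rewrite /rank.
by apply: (leq_bigmax_cond (P := fun I => (I \subset Y) && indep M I)); rewrite sIY iI.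
Qed.

Lemma max_wit (P : pred {set T}) I0 : P I0 ->
  exists2 I, P I & \max_(I | P I) #|I| = #|I|.
Proof.
move=> PI0.
have h : 0 < #|[pred I | P I]|.
  by apply/card_gt0P; exists I0.
have [I hI e] := @eq_bigmax_cond _ [pred I | P I] (fun I => #|I|) h.
by exists I.
Qed.

Lemma rank_wit Y : exists2 I : {set T}, (I \subset Y) && indep M I & #|I| = rank M Y.
Proof.
have h0 : (set0 \subset Y) && indep M set0 by rewrite sub0set; case: hM.
have [I hI e] := @max_wit (fun I => (I \subset Y) && indep M I) set0 h0.
by exists I.
Qed.

Lemma rank_extend I Y : indep M I -> I \subset Y ->
  exists J : {set T}, [/\ I \subset J, J \subset Y, indep M J & #|J| = rank M Y].
Proof.
move=> iI sIY.
have h0 : [&& I \subset I, I \subset Y & indep M I] by rewrite subxx sIY iI.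
have [J /and3P [sIJ sJY iJ] e] :=
  @max_wit (fun J => [&& I \subset J, J \subset Y & indep M J]) I h0.
exists J; split => //; apply/eqP; rewrite eqn_leq rank_ge //=.
rewrite leqNgt; apply/negP => lt.
have [K /andP [sKY iK] eK] := rank_wit Y.
rewrite -eK in lt.
have [x xKJ ixJ] := m_aug iJ iK lt.
move: xKJ; rewrite inE => /andP [xJ xK].
have : #|x |: J| <= #|J|.
  rewrite -e; apply: (leq_bigmax_cond (P := fun J => [&& I \subset J, J \subset Y & indep M J])).
  rewrite ixJ andbT; apply/andP; split.
    by apply: subset_trans sIJ (subsetUr _ _).
  by rewrite subUset sub1set (subsetP sKY x xK) sJY.
by rewrite cardsU1 xJ ltnn.
Qed.

Lemma basis_card B J : is_basis M B -> indep M J -> #|J| <= #|B|.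
Proof.
move=> /andP [iB /forallP hB] iJ; rewrite leqNgt; apply/negP => lt.
have [x xJB ixB] := m_aug iB iJ lt.
move: xJB; rewrite inE => /andP [xB _].
have := hB (x |: B); rewrite ixB subsetUr /= => /eqP e.
by move: xB; rewrite -e setU11.
Qed.

Lemma basis_big B J : is_basis M B -> indep M J -> #|B| <= #|J| -> is_basis M J.
Proof.
move=> bB iJ le; rewrite /is_basis iJ /=; apply/forallP => J'.
apply/implyP => /andP [iJ' sJ].
rewrite eq_sym eqEcard sJ /=.
apply: leq_trans le; exact: basis_card.
Qed.

Lemma flat_circ C x S :
  x \in C ->
  (exists2 B, is_basis M B & [disjoint C :\ x & B]) ->
  (forall B, is_basis M B -> ~~ [disjoint C & B]) ->
  [disjoint S & C] ->
  rank M S < rank M (x |: S).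
Proof.
move=> xC [B bB dB] nd dSC.
have [I /andP [sIS iI] eI] := rank_wit S.
have [J [sIJ sJ iJ eJ]] := rank_extend iI (subsetUl I B).
have bJ : is_basis M J.
  apply: (basis_big bB iJ); rewrite eJ; apply: rank_ge.
    by case/andP: bB.
  exact: subsetUr.
have [c cC cJ] := ndisjP (nd J bJ).
have cB : c \in B.
  move: (subsetP sJ c cJ); rewrite inE => /orP [cI|] //.
  exfalso; apply: (disjP _ _ dSC c) => //; exact: subsetP sIS c cI.
have cx : c = x.
  apply/eqP; apply: contraT => ncx.
  exfalso; apply: (disjP _ _ dB c) => //; by rewrite !inE ncx.
subst c.
have xI : x \notin I.
  apply/negP => xI; apply: (disjP _ _ dSC x) => //; exact: subsetP sIS x xI.
have : #|x |: I| <= rank M (x |: S).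
  apply: rank_ge.
    apply: m_hered iJ; by rewrite subUset sub1set cJ sIJ.
  by apply: setUS.
by rewrite cardsU1 xI eI.
Qed.

End Mat.

Section Del.
Variables (T : finType) (M : mat T) (hM : is_matroid M) (e : T).
Implicit Types I J B C S X Y K : {set T}.

Lemma delete_matroid : is_matroid (delete M e).
Proof.
case: hM => h0 h1 h2 h3; split => /=.
- by rewrite h0 inE.
- move=> I /andP [iI eI]; rewrite subsetD1 eI andbT; exact: h1.
- move=> I J sJI /andP [iI eI]; rewrite (h2 I J) //=.
  by apply: contra eI; apply: (subsetP sJI).
- move=> I J /andP [iI eI] /andP [iJ eJ] lt.
  have [x xJI ixI] := h3 I J iI iJ lt.
  exists x => //; rewrite ixI /= !inE negb_or eI andbT.
  apply/negP => /eqP ex; move: xJI; rewrite inE -ex => /andP [_ eJ'].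
  by rewrite eJ' in eJ.
Qed.

Lemma rank_delete Y : e \notin Y -> rank (delete M e) Y = rank M Y.
Proof.
move=> eY; rewrite /rank /=; apply: eq_bigl => I.
case sIY: (I \subset Y) => //=.
case: (indep M I) => //=; apply/negP => eI.
by rewrite (subsetP sIY e eI) in eY.
Qed.

Lemma dual_delete X :
  e \in ground M ->
  (exists2 B0, is_basis M B0 & e \notin B0) ->
  X \subset ground M :\ e ->
  indep (dual (delete M e)) X = indep (dual M) (e |: X).
Proof.
move=> eE [B0 bB0 eB0] sX.
rewrite /dual /= sX /=.
have -> : (e |: X) \subset ground M.
  rewrite subUset sub1set eE /=; apply: subset_trans sX _; exact: subsetDl.
rewrite /=; apply/existsP/existsP => [[B /andP [bB dXB]] | [B /andP [bB dXB]]].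
- exists B.
  have bBd := bB.
  move: bB => /andP [/andP [iB eB] _].
  have iB0 : indep (delete M e) B0 by rewrite /= eB0 andbT; case/andP: bB0.
  have := basis_card delete_matroid bBd iB0.
  move=> le.
  have -> : is_basis M B by apply: (basis_big hM bB0 iB le).
  apply/disjP => x; rewrite !inE => /orP [/eqP -> eB'|xX xB].
    by rewrite eB' in eB.
  exact: (disjP _ _ dXB x).
- exists B.
  have eB : e \notin B.
    apply/negP => eB; apply: (disjP _ _ dXB e) => //; exact: setU11.
  apply/andP; split.
    move: bB => /andP [iB /forallP hB].
    rewrite /is_basis /= iB eB /=; apply/forallP => J.
    apply/implyP => /andP [/andP [iJ _] sBJ].
    by have := hB J; rewrite iJ sBJ.
  apply/disjP => x xX xB; apply: (disjP _ _ dXB x) => //.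
  by rewrite inE xX orbT.
Qed.

End Del.


Lemma disjUr (T : finType) (X W Z : {set T}) :
  [disjoint X & W :|: Z] = [disjoint X & W] && [disjoint X & Z].
Proof.
apply/disjP/andP => [h|[h1 h2] x xX].
  split; apply/disjP => x xX xw; apply: (h x xX); by rewrite inE xw ?orbT.
by rewrite inE => /orP [] ?; [apply: (disjP _ _ h1 x) | apply: (disjP _ _ h2 x)].
Qed.

Section Hall.
Variables (I T : finType) (A : I -> {set T}).

Definition meets (J : {set I}) (Z : {set T}) := [set i in J | ~~ [disjoint A i & Z]].

Definition ptJ (J : {set I}) (Y : {set T}) := exists f : T -> option I,
  {in Y &, injective f} /\
  forall y, y \in Y -> exists2 i, f y = Some i & (i \in J) && (y \in A i).

Lemma meets_sub J (Z Z' : {set T}) : Z \subset Z' -> meets J Z \subset meets J Z'.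
Proof.
move=> sZ; apply/subsetP=> i; rewrite !inE => /andP[-> /=].
by apply: contra; apply: disjointWr.
Qed.

Lemma in_meets (J : {set I}) (Z : {set T}) i x : i \in J -> x \in A i -> x \in Z -> i \in meets J Z.
Proof.
move=> iJ xA xZ; rewrite inE iJ /=; apply/negP=> /disjP H; exact: H x xA xZ.
Qed.

Lemma hall_easy J Y (Z : {set T}) : ptJ J Y -> Z \subset Y -> #|Z| <= #|meets J Z|.
Proof.
move=> [f [finj fA]] sZ.
have inj' : {in Z &, injective f}.
  by move=> x y /(subsetP sZ) hx /(subsetP sZ) hy; apply: finj.
rewrite -(card_in_imset inj').
have -> : #|meets J Z| = #|[set Some i | i in meets J Z]|.
  by rewrite card_imset //; move=> a b [].
apply: subset_leq_card; apply/subsetP=> o /imsetP [z hz ->].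
have [i fi /andP [iJ ziA]] := fA z (subsetP sZ z hz).
rewrite fi; apply: imset_f; rewrite inE iJ /=.
by apply/negP=> /disjP H; exact: H z ziA hz.
Qed.

Lemma hall_ind n : forall J (Y : {set T}), #|Y| <= n ->
  (forall Z : {set T}, Z \subset Y -> #|Z| <= #|meets J Z|) -> ptJ J Y.
Proof.
elim: n => [|n IH] J Y hY hH.
  move: hY; rewrite leqn0 cards_eq0 => /eqP ->.
  by exists (fun _ => None); split=> [x y|y]; rewrite inE.
have [tight|notight] := boolP [exists Z : {set T},
   [&& Z != set0, Z \proper Y & #|Z| == #|meets J Z|]].
  have /existsP [Z /and3P [Z0 pZ /eqP cZ]] := tight.
  have sZY := proper_sub pZ.
  have ltZ : #|Z| <= n.
    by rewrite -ltnS; apply: leq_trans (proper_card pZ) hY.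
  have [f1 [inj1 fA1]] : ptJ J Z.
    apply: (IH J Z ltZ) => W sW; apply: hH; exact: subset_trans sW sZY.
  set K := meets J Z.
  have ltYZ : #|Y :\: Z| <= n.
    rewrite -ltnS; apply: leq_trans hY.
    rewrite -(cardsID Z Y) (setIidPr sZY) -add1n leq_add2r lt0n.
    by rewrite cards_eq0.
  have [f2 [inj2 fA2]] : ptJ (J :\: K) (Y :\: Z).
    apply: (IH _ _ ltYZ) => W sW.
    have dWZ : [disjoint W & Z].
      apply/disjP=> x /(subsetP sW); rewrite inE => /andP [/negP h _]; exact: h.
    have h1 := hH (W :|: Z) _.
    have : #|W :|: Z| <= #|meets J (W :|: Z)|.
      apply: hH; rewrite subUset sZY andbT; apply: subset_trans sW _.
      exact: subsetDl.
    rewrite cardsU (disjoint_setI0 dWZ) cards0 subn0 => h2.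
    have : #|meets J (W :|: Z)| <= #|K| + #|meets (J :\: K) W|.
      apply: leq_trans (leq_card_setU _ _).
      apply: subset_leq_card; apply/subsetP=> i.
      rewrite [in X in X -> _]/meets inE in_setU => /andP [iJ].
      rewrite disjUr negb_and => /orP [dW|dZ].
        case iK: (i \in K) => //=.
        rewrite /meets !inE iJ dW andbT; by move: iK; rewrite /K /meets inE iJ => ->.
      by rewrite /K /meets inE iJ dZ.
    rewrite /K -cZ => h3.
    by rewrite -(leq_add2r #|Z|); apply: leq_trans h2 _; rewrite addnC.
  exists (fun y => if y \in Z then f1 y else f2 y); split.
    move=> x y hx hy /=.
    case xZ: (x \in Z); case yZ: (y \in Z).
    - exact: inj1.
    - have [i fi /andP [iJ xA]] := fA1 x xZ.
      have hy' : y \in Y :\: Z by rewrite inE yZ hy.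
      have [i' fi' /andP [iJ' yA]] := fA2 y hy'.
      rewrite fi fi' => -[ii']; move: iJ'; rewrite inE -ii' (in_meets iJ xA xZ).
      by [].
    - have [i fi /andP [iJ yA]] := fA1 y yZ.
      have hx' : x \in Y :\: Z by rewrite inE xZ hx.
      have [i' fi' /andP [iJ' xA]] := fA2 x hx'.
      rewrite fi fi' => -[ii']; move: iJ'; rewrite inE ii' (in_meets iJ yA yZ).
      by [].
    - apply: inj2; by rewrite inE ?xZ ?yZ.
  move=> y hy; case yZ: (y \in Z).
    have [i fi /andP [iJ yA]] := fA1 y yZ; exists i => //; by rewrite iJ yA.
  have hy' : y \in Y :\: Z by rewrite inE yZ hy.
  have [i fi /andP [iJ yA]] := fA2 y hy'; exists i => //.
  by move: iJ; rewrite inE => /andP [_ ->]; rewrite yA.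
have [/eqP Y0|/set0Pn [y hy]] := boolP (Y == set0).
  by exists (fun _ => None); split=> [x z|z]; rewrite Y0 inE.
have : 0 < #|meets J [set y]|.
  apply: leq_trans (hH [set y] _); first by rewrite cards1.
  by rewrite sub1set.
rewrite card_gt0 => /set0Pn [i]; rewrite inE => /andP [iJ].
rewrite disjoint_sym disjoints1 negbK => yA.
have ltY : #|Y :\ y| <= n.
  by rewrite -ltnS; apply: leq_trans hY; rewrite (cardsD1 y Y) hy.
have [f2 [inj2 fA2]] : ptJ (J :\ i) (Y :\ y).
  apply: (IH _ _ ltY) => W sW.
  have [/eqP ->|W0] := boolP (W == set0); first by rewrite cards0.
  have pW : W \proper Y.
    rewrite properEneq (subset_trans sW (subsetDl _ _)) andbT.
    apply/eqP=> WY; move: sW; rewrite WY => /subsetP /(_ y hy).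
    by rewrite !inE eqxx.
  have : #|W| < #|meets J W|.
    rewrite ltn_neqAle hH ?(proper_sub pW) // andbT.
    apply/negP=> hc; move/existsP: notight; apply; exists W.
    by rewrite W0 pW hc.
  move=> h; rewrite -ltnS; apply: leq_trans h _.
  have : meets J W \subset i |: meets (J :\ i) W.
    apply/subsetP=> j; rewrite !inE => /andP [jJ ->]; rewrite jJ andbT.
    by case: (j == i).
  move/subset_leq_card; rewrite cardsU1; move=> h; apply: leq_trans h _.
  by case: (i \in _).
exists (fun z => if z == y then Some i else f2 z); split.
  move=> a b ha hb /=.
  case: (eqVneq a y) => [->|ay]; case: (eqVneq b y) => [->|bY] //.
  - have hb' : b \in Y :\ y by rewrite !inE bY hb.
    have [j fj /andP [jJ _]] := fA2 b hb'.
    by rewrite fj => -[ij]; move: jJ; rewrite !inE ij eqxx.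
  - have ha' : a \in Y :\ y by rewrite !inE ay ha.
    have [j fj /andP [jJ _]] := fA2 a ha'.
    by rewrite fj => -[ij]; move: jJ; rewrite !inE ij eqxx.
  - by apply: inj2; rewrite !inE ?ay ?bY.
move=> z hz; case: (eqVneq z y) => [->|zy].
  by exists i => //; rewrite iJ yA.
have hz' : z \in Y :\ y by rewrite !inE zy hz.
have [j fj /andP [jJ zA]] := fA2 z hz'; exists j => //.
by move: jJ; rewrite !inE => /andP [_ ->].
Qed.

Lemma hall J (Y : {set T}) : (forall Z : {set T}, Z \subset Y -> #|Z| <= #|meets J Z|) -> ptJ J Y.
Proof. exact: (@hall_ind #|Y|). Qed.

End Hall.


Section Graph.
Variables (k : nat) (G : {set {set 'I_k}}).
Hypotheses (hG : simple_graph G) (hconn : induced_connected G setT)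
  (hacyc : ~ has_cycle G).
Implicit Types U : {set 'I_k}.

Lemma adjC x y : adj G x y = adj G y x.
Proof. by rewrite /adj setUC. Qed.

Definition eU U := [rel x y | [&& adj G x y, x \in U & y \in U]].

Lemma path_in U x p y : path (eU U) x p -> y \in p -> y \in U.
Proof.
elim: p x => [|z p IH] x //= /andP [/and3P [_ _ zU] hp].
rewrite inE => /orP [/eqP -> //|]; exact: IH hp.
Qed.

Lemma path_exit (r : rel 'I_k) U p u : (forall a b, r a b -> adj G a b) ->
  u \in U -> path r u p -> last u p \notin U ->
  exists a b, [/\ a \in U, b \notin U & adj G a b].
Proof.
move=> hr; elim: p u => [|z p IH] u uU /=; first by rewrite uU.
move=> /andP [ruz hp] hl.
case zU: (z \in U); first exact: IH zU hp hl.
by exists u, z; rewrite zU uU (hr _ _ ruz).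
Qed.

Lemma exit U u w : u \in U -> w \notin U ->
  exists a b, [/\ a \in U, b \notin U & adj G a b].
Proof.
move=> uU wU.
have /connectP [p hp wl] := hconn (in_setT u) (in_setT w).
apply: (path_exit (r := eU setT)) uU hp _.
  by move=> a b /and3P [].
by rewrite -wl.
Qed.

Lemma nocyc U a b w : a \in U -> w \in U -> b \notin U -> a != w ->
  adj G b a -> adj G b w -> connect (eU U) a w -> False.
Proof.
move=> aU wU bU aw ba bw /connectP [p hp wl].
move: wl; case: (shortenP hp) => p' hp' up' _ lp'.
rewrite lp' in wU aw bw.
apply: hacyc; exists [:: b, a & p']; split.
- rewrite cons_uniq up' andbT inE negb_or; apply/andP; split.
    by apply/eqP => eba; rewrite eba aU in bU.
  apply/negP => bp; by rewrite (path_in hp' bp) in bU.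
- clear wU bw; case: p' hp' up' lp' aw => [|z p'] //= _ _ lw.
  by rewrite eqxx.
- rewrite /= rcons_path ba adjC bw /= andbT.
  by apply: (sub_path _ hp') => x y /and3P [].
Qed.

Lemma rooting i0 : exists psi : 'I_k -> {set 'I_k},
  {in [set~ i0] &, injective psi} /\
  forall v, v != i0 -> (v \in psi v) && (psi v \in G).
Proof.
pose Q U (psi : 'I_k -> {set 'I_k}) := {in U :\ i0 &, injective psi} /\
  forall v, v \in U :\ i0 -> [&& v \in psi v, psi v \in G & psi v \subset U].
suff : forall n U, i0 \in U -> k - #|U| <= n -> (exists psi, Q U psi) ->
    exists psi, Q setT psi.
  move=> /(_ k [set i0]) []; rewrite ?set11 ?leq_subr //.
    exists (fun _ => set0); split => [x y|v]; by rewrite setDv inE.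
  move=> psi [inj hp]; exists psi; split.
    move=> x y hx hy; apply: inj; by rewrite !inE; rewrite !inE in hx hy; rewrite ?hx ?hy.
  move=> v vi; have : v \in setT :\ i0 by rewrite !inE vi.
  move/hp => /and3P [? ? _].
  by apply/andP.
elim=> [|n IH] U i0U hn [psi [inj hp]].
  have eT : U = setT.
    apply/eqP; rewrite eqEcard subsetT cardsT card_ord /=.
    by rewrite -subn_eq0 -leqn0.
  by exists psi; rewrite -eT.
case: (boolP [exists w, w \notin U]) => [/existsP [w wU]|]; last first.
  move=> /existsPn hU; have eT : U = setT.
    by apply/setP => w; rewrite inE; apply/negPn/hU.
  by exists psi; rewrite -eT.
have [a [b [aU bU ab]]] := exit i0U wU.
pose psi' w := if w == b then [set b; a] else psi w.
apply: (IH (b |: U)).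
- by rewrite inE i0U orbT.
- rewrite cardsU1 bU /= add1n subnS; move: hn; case: (k - #|U|) => //.
  exists psi'; split.
  move=> x y; rewrite /psi' !inE => /andP [xi xU] /andP [yi yU].
  case: (eqVneq x b) => [xb|xb]; case: (eqVneq y b) => [yb|yb] //.
  + by rewrite xb yb.
  + move=> e; move: yU; rewrite (negbTE yb) /= => yU.
    have : y \in U :\ i0 by rewrite !inE yi yU.
  move/hp => /and3P [_ _ sU].
    by move: (subsetP sU b); rewrite -e !inE eqxx (negbTE bU) => /(_ isT).
  + move=> e; move: xU; rewrite (negbTE xb) /= => xU.
    have : x \in U :\ i0 by rewrite !inE xi xU.
  move/hp => /and3P [_ _ sU].
    by move: (subsetP sU b); rewrite e !inE eqxx (negbTE bU) => /(_ isT).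
  + move: xU yU; rewrite (negbTE xb) (negbTE yb) /= => xU yU.
    by apply: inj; rewrite !inE ?xi ?yi.
move=> v; rewrite /psi' !inE => /andP [vi vU].
case: (eqVneq v b) => [->|vb].
  rewrite !inE eqxx /=; apply/andP; split; first by rewrite setUC.
  by apply/subsetP => z; rewrite !inE => /orP [->|/eqP ->] //; rewrite aU orbT.
move: vU; rewrite (negbTE vb) /= => vU.
have : v \in U :\ i0 by rewrite !inE vi vU.
  move/hp => /and3P [-> -> sU].
by apply: subset_trans sU (subsetUr _ _).
Qed.

Lemma conn_ext U a b : a \in U -> adj G a b -> induced_connected G U ->
  induced_connected G (b |: U).
Proof.
move=> aU ab hU.
have lift : forall x y, x \in U -> y \in U -> connect (eU (b |: U)) x y.
  move=> x y xU yU; apply: (connect_sub _ (hU x y xU yU)) => p q /and3P [pq pU qU].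
  by apply: connect1; rewrite /= pq !inE pU qU !orbT.
have ba : connect (eU (b |: U)) b a.
  by apply: connect1; rewrite /= adjC ab !inE eqxx aU orbT.
have ab' : connect (eU (b |: U)) a b.
  by apply: connect1; rewrite /= ab !inE eqxx aU orbT.
move=> u v; rewrite !inE => /orP [/eqP ->|uU] /orP [/eqP ->|vU].
- exact: connect0.
- exact: connect_trans ba (lift _ _ aU vU).
- exact: connect_trans (lift _ _ uU aU) ab'.
- exact: lift.
Qed.

Lemma count_out n : forall U, k - #|U| <= n -> U != set0 -> induced_connected G U ->
  #|[set ed in G | ~~ (ed \subset U)]| <= k - #|U|.
Proof.
elim: n => [|n IH] U hn U0 hU.
  have -> : U = setT.
    apply/eqP; rewrite eqEcard subsetT cardsT card_ord /=.
    by rewrite -subn_eq0 -leqn0.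
  rewrite (_ : [set ed in G | _] = set0) ?cards0 //.
  by apply/setP => ed; rewrite !inE subsetT andbF.
case: (boolP [exists w, w \notin U]) => [/existsP [w wU]|]; last first.
  move=> /existsPn hU'; have -> : U = setT.
    by apply/setP => w; rewrite inE; apply/negPn/hU'.
  rewrite (_ : [set ed in G | _] = set0) ?cards0 //.
  by apply/setP => ed; rewrite !inE subsetT andbF.
have [u uU] := set0Pn _ U0.
have [a [b [aU bU ab]]] := exit uU wU.
have cU' := conn_ext aU ab hU.
have hcard : #|b |: U| = #|U|.+1 by rewrite cardsU1 bU.
have hle : #|b |: U| <= k by have := max_card (mem (b |: U)); rewrite card_ord.
have IH' := IH (b |: U) _ _ cU'.
have : [set ed in G | ~~ (ed \subset U)] \subset
       [set [set a; b]] :|: [set ed in G | ~~ (ed \subset b |: U)].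
  apply/subsetP => ed; rewrite !inE => /andP [edG nsU].
  rewrite edG /=.
  case: (boolP (ed \subset b |: U)) => sU'; last by rewrite orbT.
  rewrite orbF; apply/eqP.
  have /subsetPn [z zed zU] := nsU.
  have zb : z = b.
    by move: (subsetP sU' z zed); rewrite !inE (negbTE zU) orbF => /eqP.
  have /cards2P [x [y [xy edxy]]] : #|ed| == 2 by rewrite (hG edG).
  have [w' [bw' edbw]] : exists w', w' != b /\ ed = [set b; w'].
    move: zed; rewrite zb edxy !inE => /orP [/eqP bx|/eqP byy].
      by exists y; rewrite bx; split => //; rewrite eq_sym.
    by exists x; rewrite byy; split => //; rewrite setUC.
  have w'U : w' \in U.
    by move: (subsetP sU' w'); rewrite edbw !inE eqxx orbT (negbTE bw') => /(_ isT).
  have bw : adj G b w' by rewrite /adj -edbw.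
  case: (eqVneq a w') => [aw|aw]; first by rewrite edbw -aw setUC.
  exfalso; apply: (nocyc aU w'U bU aw _ bw (hU a w' aU w'U)).
  by rewrite adjC.
move/subset_leq_card => h; apply: (leq_trans h); apply: (leq_trans (leq_card_setU _ _)).
rewrite cards1 add1n.
have h1 : #|[set ed in G | ~~ (ed \subset b |: U)]| <= k - #|U|.+1.
  rewrite -hcard; apply: IH'.
    by rewrite hcard; move: hn; lia.
  by apply/set0Pn; exists b; rewrite setU11.
by move: h1 hle; rewrite hcard; lia.
Qed.

Lemma card_G (i0 : 'I_k) : #|G| <= k - 1.
Proof.
have h := @count_out k [set i0] (leq_subr _ _).
rewrite cards1 in h.
have <- : [set ed in G | ~~ (ed \subset [set i0])] = G.
  apply/setP => ed; rewrite inE.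
  case edG: (ed \in G) => //=; apply/negP => /subset_leq_card.
  by rewrite (hG edG) cards1.
apply: h; first by apply/set0Pn; exists i0; rewrite set11.
move=> u v; rewrite !inE => /eqP -> /eqP ->; exact: connect0.
Qed.

End Graph.


Lemma pt_ptJ (T I : finType) (A : I -> {set T}) (X : {set T}) :
  partial_transversal A X <-> ptJ A setT X.
Proof.
split=> [[f [fi fA]]|[f [fi fA]]]; exists f; split => // y hy.
- have [i fy yA] := fA y hy; exists i => //; by rewrite inE yA.
- have [i fy /andP [_ yA]] := fA y hy; by exists i.
Qed.

Lemma in_cl (T : finType) (N : mat T) (X : {set T}) x :
  x \in X -> x \in ground N -> x \in cl N X.
Proof.
move=> xX xg; rewrite inE xg /=.
have -> : x |: X = X by apply/setUidPr; rewrite sub1set.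
by [].
Qed.

Section Main.
Variables (T : finType) (M : mat T) (r k : nat) (A : 'I_r -> {set T}) (e : T).
Variable (G : {set {set 'I_k}}).
Hypotheses (hM : is_matroid M) (hpres : is_presentation (dual M) A)
  (he : e \in ground M) (hk0 : 0 < k) (hkr : k <= r)
  (heA : forall i : 'I_r, (e \in A i) = (i < k))
  (hG : simple_graph G) (hGp : presenting M hkr A e G)
  (hconn : induced_connected G setT) (hacyc : ~ has_cycle G).

Local Notation A' := (new_family M hkr A e (G:=G)).
Local Notation I' := ({ed : {set 'I_k} | ed \in G} + {i : 'I_r | k <= i})%type.

Lemma hAsub i : A i \subset ground M.
Proof. by case: hpres => h _; exact: h. Qed.

Lemma hPT (X : {set T}) : X \subset ground M -> indep (dual M) X <-> partial_transversal A X.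
Proof. by case: hpres => _ h; exact: h. Qed.

Lemma eAw (i : 'I_k) : e \in A (widen_ord hkr i).
Proof. by rewrite heA /= ltn_ord. Qed.

Definition R (Y : {set T}) := [set l : 'I_r | (k <= l) && ~~ [disjoint A l & Y]].

Lemma bound_meetsA' (Y : {set T}) (N0 : {set {set 'I_k}}) :
  (forall ed : {ed : {set 'I_k} | ed \in G}, ~~ [disjoint A' (inl ed) & Y] -> val ed \in N0) ->
  #|meets A' setT Y| <= #|N0| + #|R Y|.
Proof.
move=> hN.
pose S1 := [set ed : {ed : {set 'I_k} | ed \in G} | ~~ [disjoint A' (inl ed) & Y]].
pose S2 := [set i : {i : 'I_r | k <= i} | ~~ [disjoint A' (inr i) & Y]].
have sub : meets A' setT Y \subset (@inl _ _ @: S1) :|: (@inr _ _ @: S2).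
  apply/subsetP => t; rewrite inE => /andP [_ nd].
  case: t nd => [ed|i] nd; rewrite inE; apply/orP; [left|right]; apply: imset_f;
    by rewrite inE.
apply: (leq_trans (subset_leq_card sub)); apply: (leq_trans (leq_card_setU _ _)).
rewrite !card_imset; try by move=> a b [].
apply: leq_add.
  rewrite -(card_imset _ val_inj); apply: subset_leq_card.
  apply/subsetP => ? /imsetP [ed]; rewrite inE => nd ->; exact: hN.
rewrite -(card_imset _ val_inj); apply: subset_leq_card.
apply/subsetP => ? /imsetP [i]; rewrite inE => nd ->.
by rewrite inE (valP i) nd.
Qed.

Lemma meetsA_lower (Y : {set T}) (K0 : {set 'I_k}) :
  (forall i, i \in K0 -> ~~ [disjoint A (widen_ord hkr i) & Y]) ->
  #|K0| + #|R Y| <= #|meets A setT Y|.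
Proof.
move=> hK.
have winj : injective (widen_ord hkr).
  by move=> a b h; apply: val_inj; exact: (congr1 val h).
rewrite -(card_imset _ winj).
have dis : [disjoint widen_ord hkr @: K0 & R Y].
  apply/disjP => l /imsetP [i _ ->]; rewrite inE /= => /andP [kl _].
  by move: (ltn_ord i); rewrite ltnNge kl.
have := leq_card_setU (widen_ord hkr @: K0) (R Y).
case=> _; rewrite dis => /eqP <-.
apply: subset_leq_card; apply/subsetP => l; rewrite inE => /orP [/imsetP [i iK ->]|].
  by rewrite /meets inE in_setT hK.
by rewrite inE => /andP [_ nd]; rewrite /meets inE in_setT nd.
Qed.


Lemma fwd (X : {set T}) : X \subset ground M :\ e ->
  partial_transversal A (e |: X) -> partial_transversal A' X.
Proof.
move=> sX [f [finj fA]].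
have [i0 fe eA0] := fA e (setU11 e X).
have i0k : i0 < k by rewrite -heA.
have [psi [pinj hpsi]] := rooting hconn (Ordinal i0k).
pose toI (j : 'I_r) : option I' :=
  match (insub (val j) : option 'I_k) with
  | Some v => omap (@inl _ _) (insub (psi v) : option {ed : {set 'I_k} | ed \in G})
  | None => omap (@inr _ _) (insub j : option {i : 'I_r | k <= i})
  end.
have toI_some : forall j : 'I_r, j != i0 -> exists t, toI j = Some t /\
    forall x, x \in A j -> x \in ground M :\ e -> x \in A' t.
  move=> j ji0; rewrite /toI.
  case: insubP => [v jk vj|njk].
    have vi0 : v != Ordinal i0k.
      apply/negP => /eqP vi; move: ji0; rewrite -(inj_eq val_inj) -vj vi /=.
      by rewrite eqxx.
    have /andP [vpsi psiG] := hpsi v vi0.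
    case: insubP => [ed edG ped|]; last by rewrite psiG.
    exists (inl ed); split => // x xA xg /=.
    apply: in_cl => //; rewrite ped inE.
    have xe : x != e by move: xg; rewrite !inE => /andP [].
    rewrite inE xe /=; apply/bigcupP; exists v => //.
    have -> : widen_ord hkr v = j by apply: val_inj.
    by [].
  case: insubP => [i ki ij|]; last by rewrite leqNgt njk.
  exists (inr i); split => // x xA xg /=.
  by rewrite ij.
have toI_inj : forall j1 j2 : 'I_r, j1 != i0 -> j2 != i0 -> toI j1 = toI j2 -> j1 = j2.
  move=> j1 j2 h1 h2; rewrite /toI.
  have vG : forall (v : 'I_k) (j : 'I_r), val v = val j -> j != i0 -> v != Ordinal i0k.
    move=> v j vj ji; apply/negP => /eqP vi; move: ji; rewrite -(inj_eq val_inj) -vj vi /=.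
    by rewrite eqxx.
  case: (insubP _ (val j1)) => [v1 k1 e1|nk1]; case: (insubP _ (val j2)) => [v2 k2 e2|nk2].
  - have /andP [_ G1] := hpsi v1 (vG _ _ e1 h1).
    have /andP [_ G2] := hpsi v2 (vG _ _ e2 h2).
    case: (insubP _ (psi v1)) => [ed1 _ p1|]; last by rewrite G1.
    case: (insubP _ (psi v2)) => [ed2 _ p2|]; last by rewrite G2.
    move=> /= [ee]; apply: val_inj; rewrite -e1 -e2; congr (val _).
    apply: pinj; rewrite ?inE ?(vG _ _ e1 h1) ?(vG _ _ e2 h2) //.
    by rewrite -p1 -p2 ee.
  - have /andP [_ G1] := hpsi v1 (vG _ _ e1 h1).
    case: (insubP _ (psi v1)) => [ed1 _ p1|]; last by rewrite G1.
    by case: (insubP _ j2) => [i2 _ p2|n2] /= => [[]|].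
  - have /andP [_ G2] := hpsi v2 (vG _ _ e2 h2).
    case: (insubP _ (psi v2)) => [ed2 _ p2|]; last by rewrite G2.
    by case: (insubP _ j1) => [i1 _ p1|n1] /= => [[]|].
  - case: (insubP _ j1) => [i1 _ p1|n1]; last by rewrite leqNgt nk1 in n1.
    case: (insubP _ j2) => [i2 _ p2|n2]; last by rewrite leqNgt nk2 in n2.
    by move=> /= [ee]; rewrite -p1 -p2 ee.
have xne : forall x, x \in X -> exists2 j, f x = Some j & (j != i0) && (x \in A j).
  move=> x xX.
  have xeX : x \in e |: X by rewrite inE xX orbT.
  have [j fx xA] := fA x xeX; exists j => //; rewrite xA andbT.
  apply/negP => /eqP ji; have : f x = f e by rewrite fx fe ji.
  move/(finj _ _ xeX (setU11 e X)) => xe.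
  by move: (subsetP sX x xX); rewrite xe !inE eqxx.
exists (fun x => obind toI (f x)); split.
  move=> x1 x2 h1 h2 /=.
  have [j1 f1 /andP [n1 _]] := xne x1 h1.
  have [j2 f2 /andP [n2 _]] := xne x2 h2.
  rewrite f1 f2 /= => /(toI_inj _ _ n1 n2) jj.
  apply: finj; rewrite ?inE ?h1 ?h2 ?orbT // f1 f2 jj //.
move=> x xX.
have [j fx /andP [nj xA]] := xne x xX.
have [t [tj ht]] := toI_some j nj.
exists t; first by rewrite fx /= tj.
by apply: ht => //; apply: (subsetP sX).
Qed.


Lemma bwd (X : {set T}) : X \subset ground M :\ e ->
  partial_transversal A' X -> partial_transversal A (e |: X).
Proof.
move=> sX /pt_ptJ ptX.
have sXE : X \subset ground M by apply: subset_trans sX (subsetDl _ _).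
apply/pt_ptJ; apply: hall => Z sZ; rewrite leqNgt; apply/negP => viol.
pose P n := [exists C : {set T}, [&& C \subset e |: X, #|C| == n & #|meets A setT C| < #|C|]].
have exP : exists n, P n by exists #|Z|; apply/existsP; exists Z; rewrite sZ eqxx viol.
case: (ex_minnP exP) => m /existsP [C /and3P [sC /eqP cC vC]] minm.
have sCE : C \subset ground M.
  apply: subset_trans sC _; by rewrite subUset sub1set he sXE.
have minC : forall Z' : {set T}, Z' \subset C -> #|Z'| < #|C| -> #|Z'| <= #|meets A setT Z'|.
  move=> Z' sZ' lt; rewrite leqNgt; apply/negP => v'.
  have : P #|Z'|.
    by apply/existsP; exists Z'; rewrite (subset_trans sZ' sC) eqxx v'.
  by move/minm; rewrite -cC leqNgt lt.
have notPT : ~ partial_transversal A C.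
  move/pt_ptJ => h; have := hall_easy h (subxx C).
  by rewrite leqNgt vC.
have ptCx : forall x, x \in C -> partial_transversal A (C :\ x).
  move=> x xC; apply/pt_ptJ; apply: hall => Z' sZ'; apply: minC.
    exact: subset_trans sZ' (subsetDl _ _).
  apply: (leq_ltn_trans (subset_leq_card sZ')).
  by rewrite (cardsD1 x C) xC.
have hB1 : forall x, x \in C -> exists2 B : {set T}, is_basis M B & [disjoint C :\ x & B].
  move=> x xC.
  have sCx : C :\ x \subset ground M by apply: subset_trans sCE; exact: subsetDl.
  have := (hPT sCx).2 (ptCx x xC).
  rewrite /dual /= => /andP [_ /existsP [B /andP [bB dB]]]; by exists B.
have hB2 : forall B : {set T}, is_basis M B -> ~~ [disjoint C & B].
  move=> B bB; apply/negP => dCB; apply: notPT; apply/(hPT sCE).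
  by rewrite /dual /= sCE; apply/existsP; exists B; rewrite bB dCB.
have flat : forall (S0 : {set T}) x, x \in C -> [disjoint S0 & C] ->
    rank M S0 < rank M (x |: S0).
  move=> S0 x xC dS; exact: (flat_circ hM xC (hB1 x xC) hB2 dS).
case: (boolP (e \in C)) => eC.
  pose C' := C :\ e.
  have sC' : C' \subset X.
    apply/subsetP => x; rewrite !inE => /andP [xe xC].
    by move: (subsetP sC x xC); rewrite !inE (negbTE xe).
  have h1 := hall_easy ptX sC'.
  have h2 := @bound_meetsA' C' G (fun ed _ => valP ed).
  have h3 : #|R C'| <= #|R C|.
    apply: subset_leq_card; apply/subsetP => l; rewrite !inE => /andP [-> /=].
    by apply: contra; apply: disjointWr; exact: subsetDl.
  have h4 := @meetsA_lower C setT.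
  have h5 := card_G hG hconn hacyc (Ordinal hk0).
  have h6 : #|C| = #|C'|.+1 by rewrite /C' (cardsD1 e C) eC.
  have h7 : #|[set: 'I_k]| = k by rewrite cardsT card_ord.
  have : k + #|R C| <= #|meets A setT C|.
    rewrite -h7; apply: h4 => i _; apply/negP => /disjP H; exact: H e (eAw i) eC.
  move: h1 h2 h3 h5 h6 vC; lia.
have sC' : C \subset X.
  apply/subsetP => x xC; move: (subsetP sC x xC); rewrite !inE.
  case/orP => [/eqP xe|//]; by rewrite -xe xC in eC.
pose U := [set i : 'I_k | [disjoint A (widen_ord hkr i) & C]].
pose N0 := [set ed in G | ~~ (ed \subset U)].
have h1 := hall_easy ptX sC'.
have h2 : #|meets A' setT C| <= #|N0| + #|R C|.
  apply: bound_meetsA' => ed nd; rewrite inE (valP ed) /=.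
  apply/negP => sU.
  have [x xA xC] := ndisjP nd.
  move: xA => /=; rewrite inE => /andP [xg /eqP rk].
  set S' := (\bigcup_(i in val ed) A (widen_ord hkr i)) :\ e in rk.
  have eS' : e \notin S' by rewrite !inE eqxx.
  have xe : x != e by move: xg; rewrite !inE => /andP [].
  have exS : e \notin x |: S' by rewrite in_setU1 negb_or eq_sym xe eS'.
  rewrite (rank_delete M exS) (rank_delete M eS') in rk.
  have dS : [disjoint S' & C].
    apply/disjP => y; rewrite !inE => /andP [_ /bigcupP [i iv yA]] yC.
    move: (subsetP sU i iv); rewrite inE => /disjP H; exact: H y yA yC.
  by have := flat S' x xC dS; rewrite rk ltnn.
have h3 : #|N0| <= k - #|U|.
  case: (eqVneq U set0) => [U0|U0].
    have hNG : #|N0| <= #|G| by apply: subset_leq_card; apply/subsetP => ed; rewrite inE => /andP [].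
    rewrite U0 cards0 subn0; apply: (leq_trans hNG).
    apply: (leq_trans (card_G hG hconn hacyc (Ordinal hk0))); exact: leq_subr.
  apply: (count_out hG hconn hacyc (n := k)) => //; first exact: leq_subr.
  move=> u v uU vU.
  case: (eqVneq u v) => [->|uv]; first exact: connect0.
  have := hGp uv.
  set W := Ae hkr A e _.
  have sWU : W \subset U.
    apply/subsetP => i; rewrite inE => /andP [sA _]; rewrite inE.
    apply/disjP => y yA yC.
    have := subsetP sA y yA; rewrite inE => /andP [_ /eqP rk].
    have dS : [disjoint A (widen_ord hkr u) :|: A (widen_ord hkr v) & C].
      apply/disjP => z; rewrite inE => /orP [] zA zC.
        by move: uU; rewrite inE => /disjP H; exact: H z zA zC.
      by move: vU; rewrite inE => /disjP H; exact: H z zA zC.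
    by have := flat _ y yC dS; rewrite rk ltnn.
  have inW : forall w, w \in [set u; v] -> w \in W.
    move=> w hw; rewrite inE eAw andbT; apply/subsetP => y yA.
    apply: in_cl; last exact: subsetP (hAsub _) y yA.
    by rewrite inE; move: hw; rewrite !inE => /orP [] /eqP hw; subst w; rewrite yA ?orbT.
  move=> /(_ u v (inW u (set21 _ _)) (inW v (set22 _ _))).
  apply: connect_sub => a b /= /and3P [ab aW bW].
  by apply: connect1; rewrite /= ab (subsetP sWU a aW) (subsetP sWU b bW).
have h4 : #|~: U| + #|R C| <= #|meets A setT C|.
  by apply: meetsA_lower => i; rewrite !inE.
have h5 : #|U| + #|~: U| = k by rewrite cardsC card_ord.
move: h1 h2 h3 h4 h5 vC; lia.
Qed.

End Main.

Unset Implicit Arguments.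

Theorem lemma3p4 (T : finType) (M : mat T) (r k : nat) (A : 'I_r -> {set T}) (e : T)
  (hM : is_matroid M)
  (hr : r = rank (dual M) (ground M))
  (hpres : is_presentation (dual M) A)
  (hmax : forall i, is_cyclic_flat M (A i))
  (he : e \in ground M)
  (hk0 : 0 < k) (hkr : k <= r)
  (heA : forall i : 'I_r, (e \in A i) = (i < k))
  (G : {set {set 'I_k}})
  (hG : simple_graph G)
  (hGmin : minimal_presenting M hkr A e G)
  (htree : is_tree G) :
  is_presentation (dual (delete M e)) (@new_family T M r k hkr A e G).
Proof.
case: htree => hconn hacyc.
case: hGmin => hGp _.
have hAs := hAsub hpres.
split.
  move=> [ed|i] /=.
    by apply/subsetP => x; rewrite inE => /andP [xg _].
  rewrite subsetD1 hAs heA; by rewrite -leqNgt (valP i).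
move=> X sX.
have i0r : 0 < r by apply: leq_trans hk0 hkr.
have hB0 : exists2 B0, is_basis M B0 & e \notin B0.
  have se : [set e] \subset ground M by rewrite sub1set.
  have : partial_transversal A [set e].
    exists (fun _ => Some (Ordinal i0r)); split; first by move=> a b; rewrite !inE => /eqP -> /eqP ->.
    move=> y; rewrite inE => /eqP ->; exists (Ordinal i0r) => //.
    by rewrite heA.
  move/(hPT hpres se); rewrite /dual /= => /andP [_ /existsP [B /andP [bB dB]]].
  by exists B; rewrite // -disjoints1.
rewrite (dual_delete hM he hB0 sX).
have seX : e |: X \subset ground M.
  rewrite subUset sub1set he /=; apply: subset_trans sX _; exact: subsetDl.
rewrite (hPT hpres seX); split.
  exact: (@fwd T M r k A e G hkr heA hconn X sX).
exact: (@bwd T M r k A e G hM hpres he hk0 hkr heA hG hGp hconn hacyc X sX).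
Qed.
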